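(* Let $\mathbf{f}^{(1)},\mathbf{f}^{(2)}:\mathbb{R}^d\to\mathbb{R}^d$ be Lipschitz with constants $L_1,L_2>0$, with $\sup_{\mathbf{x}\in\mathbb{R}^d}\|\mathbf{f}^{(1)}(\mathbf{x})-\mathbf{f}^{(2)}(\mathbf{x})\|\le\mu$. Let $J\ge2$, $T_2>0$, $\Delta=T_2/(J-1)$, $t_j=(j-1)\Delta$, and let $0<T_1\le\breve t<T_2$ with $\breve t=t_m$ a grid point and $|\breve t-T_1|\le\eta$ ($\mu,\eta>0$). Let $\mathbf{x}(t)$ solve the switched system with initial state $\mathbf{x}_0$. Let $\widehat{\mathbf{y}}(t_1)=\mathbf{x}_0$, $\widehat{\mathbf{y}}(t_j)=\mathcal{N}_j(\widehat{\mathbf{y}}(t_{j-1}))$ for $j=2,\dots,J$, where the maps $\mathcal{N}_j:\mathbb{R}^d\to\mathbb{R}^d$ satisfy, for some $\varepsilon\ge0$ and all $j=2,\dots,J$, $\|\mathcal{N}_j(\widehat{\mathbf{y}}(t_{j-1}))-\Phi^{(k_j)}_\Delta(\widehat{\mathbf{y}}(t_{j-1}))\|\le\varepsilon$ with $k_j=1$ if $t_j\le\breve t$ and $k_j=2$ if $t_j>\breve t$. Then for $j=2,\dots,J$, $$\|\widehat{\mathbf{y}}(t_j)-\mathbf{x}(t_j)\|\le\begin{cases}\dfrac{1-\exp(L_1t_j)}{1-\exp(L_1\Delta)}\varepsilon, & t_j\in(0,T_1],\\[2mm] \mu(t_j-T_1)\exp\big(\max(L_1,L_2)(t_j-T_1)\big)+\dfrac{1-\exp(L_1t_j)}{1-\exp(L_1\Delta)}\varepsilon,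 & t_j\in(T_1,\breve t],\\[2mm] \mu\eta\exp\big(L_2(t_j-\breve t)+\max(L_1,L_2)\eta\big)+\dfrac{1-\exp(L_2(t_j-\breve t))}{1-\exp(L_2\Delta)}\varepsilon+\exp\big(L_2(t_j-\breve t)\big)\dfrac{1-\exp(L_1\breve t)}{1-\exp(L_1\Delta)}\varepsilon, & t_j\in(\breve t,T_2].\end{cases}$$
   Context: $\|\cdot\|$ is the Euclidean norm. The switched system is $\frac{d}{dt}\mathbf{x}(t)=\mathbf{f}^{(\sigma(t))}(\mathbf{x}(t))$, $\mathbf{x}(0)=\mathbf{x}_0$, with $\sigma(t)=1$ for $t\in(0,T_1]$ and $\sigma(t)=2$ for $t\in(T_1,T_2]$; $T_1$ is the (unknown) switching time and $\breve t$ is its approximation identified by the paper's adaptive algorithm. For $k=1,2$, $\Phi^{(k)}_\Delta(\mathbf{z})$ denotes the state at time $\Delta$ of the solution of $\frac{d}{dt}\mathbf{z}=\mathbf{f}^{(k)}(\mathbf{z})$ started at $\mathbf{z}$ (the $\Delta$-lag flow map). The maps $\mathcal{N}_j$ are the trained local neural networks used to predict one time step; the accuracy hypothesis encodes that networks used for steps up to $\breve t$ approximate $\Phi^{(1)}_\Delta$ and those after approximate $\Phi^{(2)}_\Delta$ within $\varepsilon$ at the predicted states. *)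

(* Defs.v *)
From HB Require Import structures.
From mathcomp Require Import all_boot all_order all_algebra.
From mathcomp Require Import all_classical all_reals all_analysis.
Set Implicit Arguments. Unset Strict Implicit. Unset Printing Implicit Defensive.
Import Order.TTheory GRing.Theory Num.Theory.
Import numFieldNormedType.Exports.
Local Open Scope classical_set_scope.
Local Open Scope ring_scope.

Notation vec R d := 'rV[R]_d.

Definition enorm {R : realType} {d : nat} (v : vec R d) : R :=
  Num.sqrt (\sum_(i < d) (v ord0 i) ^+ 2).

Definition lipschitz_with {R : realType} {d : nat} (f : vec R d -> vec R d) (L : R) :=
  forall x y : vec R d, enorm (f x - f y) <= L * enorm (x - y).

Definition solves_on {R : realType} {d : nat} (f : vec R d -> vec R d)
    (a b : R) (y : R -> vec R d) : Prop :=
  {within `[a, b], continuous y} /\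
  (forall t : R, a < t < b -> is_derive t (1 : R) y (f (y t))).

Definition is_flow_map {R : realType} {d : nat} (f : vec R d -> vec R d)
    (Delta : R) (Phi : vec R d -> vec R d) : Prop :=
  forall z : vec R d, exists y : R -> vec R d,
    y 0 = z /\ solves_on f 0 Delta y /\ y Delta = Phi z.

Definition switched_solution {R : realType} {d : nat} (f1 f2 : vec R d -> vec R d)
    (T1 T2 : R) (x0 : vec R d) (x : R -> vec R d) : Prop :=
  x 0 = x0 /\ {within `[0, T2], continuous x} /\
  solves_on f1 0 T1 x /\ solves_on f2 T1 T2 x.

Definition tgrid {R : realType} (Delta : R) (j : nat) : R := (j.-1)%:R * Delta.

(* Main.v *)
Require Import Defs.
From HB Require Import structures.
From mathcomp Require Import all_boot all_order all_algebra.
From mathcomp Require Import all_classical all_reals all_analysis.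
From mathcomp Require Import ring lra zify.
Import Order.TTheory GRing.Theory Num.Theory.
Import numFieldNormedType.Exports.
Local Open Scope classical_set_scope.
Local Open Scope ring_scope.

Section S.
Context {R : realType} {d : nat}.

Lemma is_derive_shiftT (f : R -> vec R d) (t a : R) (df : vec R d) :
  is_derive (t + a) 1 f df -> is_derive t 1 (fun s => f (s + a)) df.
Proof.
move=> [dv dd].
have E : (fun h : R => h^-1 *: (((fun s => f (s + a)) \o shift t) (h *: 1) - f (t + a))) =
   (fun h => h^-1 *: ((f \o shift (t + a)) (h *: 1) - f (t + a))).
  by apply/funext => h; rewrite /= addrA.
constructor; first by rewrite /derivable E.
by rewrite /derive E.
Qed.

Lemma is_derive_coord (u : R -> vec R d) (t : R) (U : vec R d) (i : 'I_d) :
  is_derive t 1 u U -> is_derive t 1 (fun s => u s ord0 i) (U ord0 i).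
Proof.
move=> [du <-]; have dc := (derivable_mxP u t 1).1 du ord0 i.
by constructor => //; rewrite (derive_mx du) mxE.
Qed.

Lemma within_shift (T : topologicalType) (f : R -> T) (A B : set R) k :
  {within A, continuous f} -> (forall t, B t -> A (t + k)) ->
  {within B, continuous (fun t => f (t + k))}.
Proof.
move=> cf BA; apply/subspace_continuousP => x Bx.
have := (subspace_continuousP _ _).1 cf (x + k) (BA _ Bx).
move=> h; apply: cvg_trans _ h => P /=.
rewrite /within /=.
move=> HP.
have cs : (fun t : R => t + k) @ nbhs x --> nbhs (x + k).
  by apply: cvgD; [exact: cvg_id | exact: cvg_cst].
have := cs _ HP.
change (nbhs x (fun t => A (t+k) -> P (f (t+k))) -> nbhs x (fun t => B t -> P (f (t+k)))).
by apply: filterS => t H1 Bt; exact: H1 (BA _ Bt).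
Qed.

Lemma sum_expand (a b : 'I_d -> R) (t : R) :
  \sum_i (t * a i - b i) ^+ 2 =
  t ^+ 2 * \sum_i a i ^+ 2 - 2 * t * \sum_i (a i * b i) + \sum_i b i ^+ 2.
Proof.
rewrite !mulr_sumr -sumrB -big_split /=; apply: eq_bigr => i _.
rewrite sqrrB; ring.
Qed.

Lemma cs_bound (a b : 'I_d -> R) (S K : R) : 0 < S -> 0 < K ->
  \sum_i a i ^+ 2 <= S ^+ 2 -> \sum_i b i ^+ 2 <= K ^+ 2 ->
  \sum_i (a i * b i) <= S * K.
Proof.
move=> S0 K0 hA hB.
set t := K / S.
have t0 : 0 < t by rewrite divr_gt0.
have tS : t * S = K by rewrite /t divfK ?gt_eqF.
have H := sum_expand a b t.
have H0 : 0 <= \sum_i (t * a i - b i) ^+ 2 by apply: sumr_ge0 => i _; exact: sqr_ge0.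
set A := \sum_i a i ^+ 2 in H hA. set B := \sum_i b i ^+ 2 in H hB.
set P := \sum_i (a i * b i) in H *.
have h1 : t ^+ 2 * A <= t ^+ 2 * S ^+ 2 by rewrite ler_pM2l ?exprn_gt0.
have h2 : t * P <= t * (S * K).
  have : t ^+ 2 * S ^+ 2 = K ^+ 2 by rewrite -exprMn tS.
  have : t * (S * K) = K ^+ 2 by rewrite mulrA tS expr2.
  lra.
by rewrite ler_pM2l in h2.
Qed.

Lemma is_derive_ext (f g : R -> R) (x df : R) :
  (forall t, f t = g t) -> is_derive x 1 f df -> is_derive x 1 g df.
Proof. by move=> /funext ->. Qed.

Lemma cmp0 (F G : vec R d -> vec R d) (L c h : R) (u v : R -> vec R d) :
  0 < L -> 0 <= c -> 0 <= h ->
  (forall p q, enorm (F p - G q) <= L * enorm (p - q) + c) ->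
  {within `[0, h], continuous u} -> {within `[0, h], continuous v} ->
  (forall t, 0 < t < h -> is_derive t 1 u (F (u t))) ->
  (forall t, 0 < t < h -> is_derive t 1 v (G (v t))) ->
  enorm (u h - v h) <= expR (L * h) * enorm (u 0 - v 0) + c / L * (expR (L * h) - 1).
Proof.
move=> L0 c0 h0 FG cu cv du dv.
apply/ler_addgt0Pr => e e0.
pose K := expR (L * h).
have K0 : 0 < K := expR_gt0 _.
pose dl := e / K.
have dl0 : 0 < dl by rewrite divr_gt0.
pose s := fun M : vec R d => \sum_(i < d) (M ord0 i) ^+ 2.
have s0 M : 0 <= s M by apply: sumr_ge0 => i _; exact: sqr_ge0.
have enE M : enorm M = Num.sqrt (s M) by [].
pose Q := fun M : vec R d => Num.sqrt (s M + dl ^+ 2) + c / L.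
pose E := fun t : R => expR ((- L) * t).
pose phi := fun t => E t * Q (u t - v t).
have key : phi h <= phi 0.
  case: (eqVneq h 0) => [->|hn0]; first by [].
  have hp : 0 < h by rewrite lt_def hn0.
  pose w := fun (i : 'I_d) t => u t ord0 i - v t ord0 i.
  pose w' := fun (i : 'I_d) t => F (u t) ord0 i - G (v t) ord0 i.
  pose sg := fun t => s (u t - v t) + dl ^+ 2.
  have sgE t : sg t = \sum_i (w i t) ^+ 2 + dl ^+ 2.
    by rewrite /sg /s; congr (_ + _); apply: eq_bigr => i _; rewrite !mxE.
  have sg0 t : 0 < sg t by rewrite /sg ltr_wpDl // exprn_gt0.
  pose P := fun t => \sum_i (w i t * w' i t).
  pose dphi := fun t => E t * (P t / Num.sqrt (sg t)) + Q (u t - v t) * (- L * E t).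
  have Dphi : forall t, t \in `]0, h[ -> is_derive t 1 phi (dphi t).
    move=> t; rewrite in_itv /= => th.
    have dwi i : is_derive t 1 (w i) (w' i t).
      apply: (@is_derive_ext ((fun s => u s ord0 i) - (fun s => v s ord0 i))) => //.
      by apply: is_deriveB; apply: is_derive_coord; [exact: du | exact: dv].
    have dw2 i : is_derive t 1 (fun r => w i r ^+ 2) (2 * (w i t * w' i t)).
      apply: (@is_derive_ext (w i * w i)); first by move=> r; rewrite expr2.
      apply: (is_derive_eq (is_deriveM (dwi i) (dwi i))).
      by rewrite /= mulr2n mulrDl mul1r.
    have dsg : is_derive t 1 sg (2 * P t).
      apply: (@is_derive_ext ((\sum_i (fun r => w i r ^+ 2)) + cst (dl ^+ 2))).
        by move=> r; rewrite sgE /= fct_sumE.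
      apply: (is_derive_eq (is_deriveD (is_derive_sum dw2) (is_derive_cst (dl ^+ 2) t 1))).
      by rewrite addr0 /P mulr_sumr.
    have dS : is_derive t 1 (fun r => Num.sqrt (sg r)) (P t / Num.sqrt (sg t)).
      apply: (@is_derive_ext (Num.sqrt \o sg)) => //.
      apply: (is_derive_eq (is_derive1_comp (is_derive1_sqrt (sg0 t)) dsg)).
      have s0' : Num.sqrt (sg t) != 0 by rewrite gt_eqF // sqrtr_gt0.
      by field.
    have dQ : is_derive t 1 (fun r => Q (u r - v r)) (P t / Num.sqrt (sg t)).
      apply: (@is_derive_ext ((fun r => Num.sqrt (sg r)) + cst (c / L))) => //.
      by apply: (is_derive_eq (is_deriveD dS (is_derive_cst (c / L) t 1))); rewrite addr0.
    have dE : is_derive t 1 E (- L * E t).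
      apply: (@is_derive_ext (expR \o ((- L) \*: id))) => //.
      apply: (is_derive_eq (is_derive1_comp (is_derive_expR _) (is_deriveZ (- L) (is_derive_id t 1)))).
      rewrite /E /= mulrC; congr (_ * _); rewrite -[RHS]mulr1; reflexivity.
    apply: (@is_derive_ext (E * (fun r => Q (u r - v r)))) => //.
    apply: (is_derive_eq (is_deriveM dE dQ)).
    by rewrite /dphi.
  have cphi : {within `[0, h], continuous phi}.
    have cQ : continuous Q.
      move=> M; apply: (@cvgD _ _ _ (nbhs M) _ (fun M => Num.sqrt (s M + dl ^+ 2)) (fun=> c / L)); last exact: cvg_cst.
      apply: (@continuous_comp _ _ _ (fun M : vec R d => s M + dl ^+ 2) Num.sqrt); last exact: sqrt_continuous.
      apply: (@cvgD _ _ _ (nbhs M) _ s (fun=> dl ^+ 2)); last exact: cvg_cst.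
      apply: (@cvg_big _ _ +%R 0 xpredT add_continuous) => i _.
      by apply: (@cvgM _ _ (nbhs M) _ (fun M : vec R d => M ord0 i) (fun M : vec R d => M ord0 i)); exact: coord_continuous.
    have cE : continuous E.
      move=> x; apply: (@continuous_comp _ _ _ (fun t => - L * t) expR); last exact: continuous_expR.
      by apply: (@cvgM _ _ (nbhs x) _ (fun=> - L) id); [exact: cvg_cst | exact: cvg_id].
    have cW : {within `[0, h], continuous (u - v)} := within_continuousB cu cv.
    have cQW : {within `[0, h], continuous (Q \o (u - v))}.
      by apply: within_continuous_comp => // x _; exact: cQ.
    have cE' : {within `[0, h], continuous E} by apply: continuous_subspaceT.
    move=> x; apply: (@cvgM _ _ (nbhs x) _ E (Q \o (u - v))); [exact: (cE' x) | exact: (cQW x)].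
  have [t th eq] := @MVT R phi dphi 0 h hp Dphi cphi.
  rewrite -subr_le0 eq subr0 pmulr_lle0 //.
  set S := Num.sqrt (sg t).
  have S0 : 0 < S by rewrite sqrtr_gt0.
  have SS : S ^+ 2 = sg t by rewrite sqr_sqrtr // ltW.
  have hA : \sum_i (w i t) ^+ 2 <= S ^+ 2.
    by rewrite SS sgE lerDl sqr_ge0.
  have hb : enorm (F (u t) - G (v t)) <= L * S + c.
    apply: (le_trans (FG _ _)); rewrite lerD2r ler_pM2l // enE ler_sqrt; last exact: ltW.
    by rewrite /sg lerDl sqr_ge0.
  have K0s : 0 < L * S + c by rewrite ltr_wpDr // mulr_gt0.
  have hB : \sum_i (w' i t) ^+ 2 <= (L * S + c) ^+ 2.
    have -> : \sum_i (w' i t) ^+ 2 = enorm (F (u t) - G (v t)) ^+ 2.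
      rewrite enE sqr_sqrtr // /s; apply: eq_bigr => i _; rewrite !mxE //.
    by rewrite lerXn2r // ?nnegrE ?sqrtr_ge0 // ltW.
  have hP := cs_bound (fun i => w i t) (fun i => w' i t) S (L * S + c) S0 K0s hA hB.
  rewrite /dphi /Q -/S.
  have E0' : 0 < E t by exact: expR_gt0.
  have hPS : P t / S <= L * S + c.
    by rewrite ler_pdivrMr // mulrC.
  have -> : (S + c / L) * (- L * E t) = - (E t * (L * S + c)).
    by rewrite mulrDr; field; rewrite gt_eqF.
  by rewrite subr_le0 ler_pM2l.
have Eh : E h = K^-1 by rewrite /E /K mulNr expRN.
have E0 : E 0 = 1 by rewrite /E mulr0 expR0.
move: key; rewrite /phi Eh E0 mul1r => key.
have key2 : Q (u h - v h) <= K * Q (u 0 - v 0).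
  by rewrite -(ler_pM2l (_ : 0 < K^-1)) ?invr_gt0 //  mulrA mulVf ?gt_eqF // mul1r.
have l1 : enorm (u h - v h) <= Q (u h - v h) - c / L.
  rewrite /Q addrK enE ler_sqrt; last by rewrite addr_ge0 // sqr_ge0.
  by rewrite lerDl sqr_ge0.
have l2 : Num.sqrt (s (u 0 - v 0) + dl ^+ 2) <= enorm (u 0 - v 0) + dl.
  rewrite -[X in _ <= X]ger0_norm; last by rewrite addr_ge0 ?sqrtr_ge0 ?ltW.
  rewrite -sqrtr_sqr ler_sqrt ?sqr_ge0 // sqrrD enE sqr_sqrtr //.
  by rewrite lerD2r lerDl mulrn_wge0 // mulr_ge0 ?sqrtr_ge0 ?ltW.
apply: (le_trans l1); apply: (le_trans (lerB key2 (lexx (c / L)))).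
have eK : e = K * dl by rewrite /dl mulrC divfK ?gt_eqF.
have H : K * Num.sqrt (s (u 0 - v 0) + dl ^+ 2) <= K * (enorm (u 0 - v 0) + dl).
  by rewrite ler_pM2l.
rewrite /Q -/K eK; lra.
Qed.

Lemma cmp (F G : vec R d -> vec R d) (L c h : R) (y z : R -> vec R d) (a b a' b' s s' : R) :
  0 < L -> 0 <= c -> 0 <= h ->
  (forall p q, enorm (F p - G q) <= L * enorm (p - q) + c) ->
  solves_on F a b y -> solves_on G a' b' z ->
  a <= s -> s + h <= b -> a' <= s' -> s' + h <= b' ->
  enorm (y (s + h) - z (s' + h)) <= expR (L * h) * enorm (y s - z s') + c / L * (expR (L * h) - 1).
Proof.
move=> L0 c0 h0 FG [cy dy] [cz dz] as0 sb as0' sb'.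
have := @cmp0 F G L c h (fun t => y (t + s)) (fun t => z (t + s')) L0 c0 h0 FG.
rewrite !add0r ![h + _]addrC; apply.
- apply: (@within_shift _ y `[a, b] _ s cy) => t /=; rewrite !in_itv /= => /andP[t0 th].
  by apply/andP; split; lra.
- apply: (@within_shift _ z `[a', b'] _ s' cz) => t /=; rewrite !in_itv /= => /andP[t0 th].
  by apply/andP; split; lra.
- move=> t /andP[t0 th]; apply: is_derive_shiftT; apply: dy.
  by apply/andP; split; lra.
- move=> t /andP[t0 th]; apply: is_derive_shiftT; apply: dz.
  by apply/andP; split; lra.
Qed.

Lemma enorm_ge0 (v : vec R d) : 0 <= enorm v.
Proof. exact: sqrtr_ge0. Qed.

Lemma enorm0 : enorm (0 : vec R d) = 0.
Proof.
rewrite /enorm (eq_bigr (fun _ => 0)) ?big1 ?sqrtr0 // => i _.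
by rewrite mxE expr0n.
Qed.

Lemma enormN (v : vec R d) : enorm (- v) = enorm v.
Proof. by rewrite /enorm; congr Num.sqrt; apply: eq_bigr => i _; rewrite mxE sqrrN. Qed.

Lemma enormB (v w : vec R d) : enorm (v - w) = enorm (w - v).
Proof. by rewrite -enormN opprB. Qed.

Lemma cs (a b : 'I_d -> R) :
  \sum_i (a i * b i) <= Num.sqrt (\sum_i a i ^+ 2) * Num.sqrt (\sum_i b i ^+ 2).
Proof.
have A0 : 0 <= \sum_i a i ^+ 2 by apply: sumr_ge0 => i _; exact: sqr_ge0.
have B0 : 0 <= \sum_i b i ^+ 2 by apply: sumr_ge0 => i _; exact: sqr_ge0.
case: (eqVneq (\sum_i a i ^+ 2) 0) => [Az|Anz].
  have H := psumr_eq0P (fun j _ => sqr_ge0 (a j)) Az.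
  rewrite big1 ?mulr_ge0 ?sqrtr_ge0 // => i _.
  by have /eqP := H i isT; rewrite sqrf_eq0 => /eqP->; rewrite mul0r.
case: (eqVneq (\sum_i b i ^+ 2) 0) => [Bz|Bnz].
  have H := psumr_eq0P (fun j _ => sqr_ge0 (b j)) Bz.
  rewrite big1 ?mulr_ge0 ?sqrtr_ge0 // => i _.
  by have /eqP := H i isT; rewrite sqrf_eq0 => /eqP->; rewrite mulr0.
apply: cs_bound; rewrite ?sqrtr_gt0 ?lt_def ?Anz ?Bnz //= ?sqr_sqrtr //.
Qed.

Lemma enormD (v w : vec R d) : enorm (v + w) <= enorm v + enorm w.
Proof.
rewrite {1}/enorm -[X in _ <= X]ger0_norm ?addr_ge0 ?enorm_ge0 //.
rewrite -sqrtr_sqr ler_sqrt ?sqr_ge0 // sqrrD /enorm !sqr_sqrtr; last 2 first.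
- by apply: sumr_ge0 => i _; exact: sqr_ge0.
- by apply: sumr_ge0 => i _; exact: sqr_ge0.
have -> : \sum_(i < d) (v + w) ord0 i ^+ 2 =
   \sum_i v ord0 i ^+ 2 + (\sum_i (v ord0 i * w ord0 i)) *+ 2 + \sum_i w ord0 i ^+ 2.
  rewrite -sumrMnl -!big_split /=; apply: eq_bigr => i _; rewrite mxE sqrrD //.
rewrite lerD2r lerD2l lerMn2r /=; exact: cs.
Qed.

Lemma lip0 {f : vec R d -> vec R d} {L : R} : lipschitz_with f L ->
  forall p q, enorm (f p - f q) <= L * enorm (p - q) + 0.
Proof. by move=> lf p q; rewrite addr0; exact: lf. Qed.

Lemma lip_mixed {f1 f2 : vec R d -> vec R d} {L mu : R} : lipschitz_with f1 L ->
  (forall z, enorm (f1 z - f2 z) <= mu) ->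
  forall p q, enorm (f1 p - f2 q) <= L * enorm (p - q) + mu.
Proof.
move=> lf fm p q.
have -> : f1 p - f2 q = (f1 p - f1 q) + (f1 q - f2 q) by rewrite addrA subrK.
by apply: le_trans (enormD _ _) _; apply: lerD.
Qed.

Lemma flow_lip (f : vec R d -> vec R d) (L Dl : R) Phi : 0 < L -> 0 <= Dl ->
  lipschitz_with f L -> is_flow_map f Dl Phi ->
  forall p q, enorm (Phi p - Phi q) <= expR (L * Dl) * enorm (p - q).
Proof.
move=> L0 D0 lf fl p q.
have [y [y0 [sy yD]]] := fl p; have [z [z0 [sz zD]]] := fl q.
have := @cmp f f L 0 Dl y z 0 Dl 0 Dl 0 0 L0 (lexx 0) D0 (lip0 lf) sy sz (lexx 0)
  (ltac:(by rewrite add0r)) (lexx 0) (ltac:(by rewrite add0r)).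
by rewrite !add0r y0 z0 yD zD !mul0r addr0.
Qed.

Lemma step_bound (Phi : vec R d -> vec R d) K (yp yn xp xn : vec R d) (eps : R) :
  (forall p q, enorm (Phi p - Phi q) <= K * enorm (p - q)) ->
  enorm (yn - Phi yp) <= eps ->
  enorm (yn - xn) <= eps + K * enorm (yp - xp) + enorm (Phi xp - xn).
Proof.
move=> lP he.
have -> : yn - xn = (yn - Phi yp) + (Phi yp - Phi xp) + (Phi xp - xn).
  by rewrite !addrA subrK subrK.
apply: le_trans (enormD _ _) _; rewrite lerD2r.
by apply: le_trans (enormD _ _) _; apply: lerD.
Qed.

Lemma D1bound (f1 f2 : vec R d -> vec R d) L1 mu T1 T2 Dl Phi1 (x : R -> vec R d) a :
  0 < L1 -> 0 < Dl -> 0 <= mu -> lipschitz_with f1 L1 -> (forall z, enorm (f1 z - f2 z) <= mu) ->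
  solves_on f1 0 T1 x -> solves_on f2 T1 T2 x -> is_flow_map f1 Dl Phi1 ->
  0 <= a -> a + Dl <= T2 ->
  enorm (Phi1 (x a) - x (a + Dl)) <=
    mu / L1 * (expR (L1 * (Num.max 0 (a + Dl - T1) - Num.max 0 (a - T1))) - 1).
Proof.
move=> L0 D0 mu0 lf fm s1 s2 fl a0 aT2.
have [y [y0 [sy yD]]] := fl (x a).
case: (leP (a + Dl) T1) => h1.
  have -> : Num.max 0 (a + Dl - T1) = 0 by apply/max_idPl; lra.
  have -> : Num.max 0 (a - T1) = 0 by apply/max_idPl; lra.
  rewrite subrr mulr0 expR0 subrr mulr0.
  have := @cmp f1 f1 L1 0 Dl y x 0 Dl 0 T1 0 a L0 (lexx 0) (ltW D0) (lip0 lf) sy s1 (lexx 0)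
    (ltac:(by rewrite add0r)) a0 h1.
  by rewrite !add0r y0 yD subrr enorm0 mulr0 !mul0r addr0.
case: (leP T1 a) => h2.
  have -> : Num.max 0 (a + Dl - T1) = a + Dl - T1 by apply/max_idPr; lra.
  have -> : Num.max 0 (a - T1) = a - T1 by apply/max_idPr; lra.
  have -> : a + Dl - T1 - (a - T1) = Dl by ring.
  have := @cmp f1 f2 L1 mu Dl y x 0 Dl T1 T2 0 a L0 mu0 (ltW D0) (lip_mixed lf fm) sy s2 (lexx 0)
    (ltac:(by rewrite add0r)) h2 aT2.
  by rewrite !add0r y0 yD subrr enorm0 mulr0 add0r.
pose r := T1 - a.
have r0 : 0 <= r by rewrite /r; lra.
have := @cmp f1 f1 L1 0 r y x 0 Dl 0 T1 0 a L0 (lexx 0) r0 (lip0 lf) sy s1 (lexx 0)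
  (ltac:(rewrite add0r /r; lra)) a0 (ltac:(rewrite /r; lra)).
rewrite !add0r y0 subrr enorm0 mulr0 !mul0r addr0 (_ : a + r = T1); last by rewrite /r; ring.
move=> hA.
have hA0 : enorm (y r - x T1) = 0 by apply/eqP; rewrite eq_le hA enorm_ge0.
have := @cmp f1 f2 L1 mu (Dl - r) y x 0 Dl T1 T2 r T1 L0 mu0 (ltac:(rewrite /r; lra)) (lip_mixed lf fm) sy s2 r0
  (ltac:(lra)) (lexx T1) (ltac:(rewrite /r; lra)).
rewrite hA0 mulr0 add0r (_ : r + (Dl - r) = Dl); last by ring.
rewrite (_ : T1 + (Dl - r) = a + Dl); last by rewrite /r; ring.
rewrite yD.
have -> : Num.max 0 (a + Dl - T1) = a + Dl - T1 by apply/max_idPr; lra.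
have -> : Num.max 0 (a - T1) = 0 by apply/max_idPl; lra.
by rewrite subr0 (_ : Dl - r = a + Dl - T1) // /r; ring.
Qed.

Lemma D2bound (f2 : vec R d -> vec R d) L2 T1 T2 Dl Phi2 (x : R -> vec R d) a :
  0 < L2 -> 0 < Dl -> lipschitz_with f2 L2 ->
  solves_on f2 T1 T2 x -> is_flow_map f2 Dl Phi2 ->
  T1 <= a -> a + Dl <= T2 ->
  enorm (Phi2 (x a) - x (a + Dl)) <= 0.
Proof.
move=> L0 D0 lf s2 fl a0 aT2.
have [y [y0 [sy yD]]] := fl (x a).
have := @cmp f2 f2 L2 0 Dl y x 0 Dl T1 T2 0 a L0 (lexx 0) (ltW D0) (lip0 lf) sy s2 (lexx 0)
  (ltac:(by rewrite add0r)) a0 aT2.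
by rewrite !add0r y0 yD subrr enorm0 mulr0 !mul0r addr0.
Qed.

Lemma S_step (L Dl a eps : R) : 0 < L -> 0 < Dl ->
  eps + expR (L * Dl) * ((1 - expR (L * a)) / (1 - expR (L * Dl)) * eps) =
  (1 - expR (L * (a + Dl))) / (1 - expR (L * Dl)) * eps.
Proof.
move=> L0 D0.
have K1 : 1 - expR (L * Dl) != 0.
  by rewrite subr_eq0 eq_sym gt_eqF // expR_gt1 mulr_gt0.
rewrite mulrDr expRD; field => //.
Qed.

Lemma mu_alg (L Dl pa pb : R) : pa = 0 \/ pb = pa + Dl ->
  expR (L * Dl) * (expR (L * pa) - 1) + (expR (L * (pb - pa)) - 1) = expR (L * pb) - 1.
Proof.
case=> [->|->]; first by rewrite mulr0 expR0 subrr mulr0 add0r subr0.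
have -> : pa + Dl - pa = Dl by ring.
by rewrite [L * (pa + Dl)]mulrDr expRD; ring.
Qed.

Lemma expm1_le (L s : R) : 0 < L -> 0 <= s ->
  (expR (L * s) - 1) / L <= s * expR (L * s).
Proof.
move=> L0 s0.
have E0 : 0 < expR (L * s) := expR_gt0 _.
have h := expR_ge1Dx (- (L * s)).
rewrite expRN in h.
have h2 : expR (L * s) * (1 - L * s) <= 1.
  by rewrite -(ler_pM2l (_ : 0 < (expR (L * s))^-1)) ?invr_gt0 // mulrA mulVf ?gt_eqF // mul1r mulr1.
rewrite ler_pdivrMr //.
nra.
Qed.
End S.

Theorem mainTheorem5 (R : realType) (d : nat)
  (f1 f2 : vec R d -> vec R d) (L1 L2 mu eta eps T1 T2 : R) (J m : nat)
  (x0 : vec R d) (x : R -> vec R d)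
  (Phi1 Phi2 : vec R d -> vec R d)
  (N : nat -> vec R d -> vec R d) (yhat : nat -> vec R d) :
  0 < L1 -> 0 < L2 -> lipschitz_with f1 L1 -> lipschitz_with f2 L2 ->
  0 < mu -> (forall z, enorm (f1 z - f2 z) <= mu) ->
  (2 <= J)%N -> 0 < T2 ->
  let Delta := T2 / (J.-1)%:R in
  let tb := tgrid Delta m in
  (1 <= m <= J)%N ->
  0 < T1 -> T1 <= tb -> tb < T2 -> 0 < eta -> `|tb - T1| <= eta ->
  switched_solution f1 f2 T1 T2 x0 x ->
  is_flow_map f1 Delta Phi1 -> is_flow_map f2 Delta Phi2 ->
  yhat 1%N = x0 ->
  (forall j, (2 <= j <= J)%N -> yhat j = N j (yhat j.-1)) ->
  0 <= eps ->
  (forall j, (2 <= j <= J)%N ->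
     enorm (N j (yhat j.-1) -
            (if tgrid Delta j <= tb then Phi1 else Phi2) (yhat j.-1)) <= eps) ->
  forall j, (2 <= j <= J)%N ->
    let tj := tgrid Delta j in
    let err := enorm (yhat j - x tj) in
    (0 < tj <= T1 ->
       err <= (1 - expR (L1 * tj)) / (1 - expR (L1 * Delta)) * eps) /\
    (T1 < tj <= tb ->
       err <= mu * (tj - T1) * expR (Num.max L1 L2 * (tj - T1))
              + (1 - expR (L1 * tj)) / (1 - expR (L1 * Delta)) * eps) /\
    (tb < tj <= T2 ->
       err <= mu * eta * expR (L2 * (tj - tb) + Num.max L1 L2 * eta)
              + (1 - expR (L2 * (tj - tb))) / (1 - expR (L2 * Delta)) * eps
              + expR (L2 * (tj - tb)) * ((1 - expR (L1 * tb)) / (1 - expR (L1 * Delta)) * eps)).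
Proof.
move=> L10 L20 lf1 lf2 mu0 fmu J2 T20 Delta tb mJ T10 T1tb tbT2 eta0 etab
  [xx0 [_ [s1 s2]]] fl1 fl2 y1 yrec eps0 Nacc j jJ tj err.
have Jpos : 0 < (J.-1)%:R :> R by rewrite ltr0n; clear -J2; lia.
have D0 : 0 < Delta by rewrite divr_gt0.
have tS k : (1 <= k)%N -> tgrid Delta k.+1 = tgrid Delta k + Delta.
  by case: k => // k _; rewrite /tgrid /= mulrSr mulrDl mul1r.
have t1 : tgrid Delta 1 = 0 by rewrite /tgrid mul0r.
have tJ : tgrid Delta J = T2 by rewrite /tgrid /Delta mulrC divfK ?gt_eqF.
have tmono i k : (i <= k)%N -> tgrid Delta i <= tgrid Delta k.
  by move=> ik; rewrite /tgrid ler_pM2r // ler_nat; clear -ik; lia.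
have tstrict i k : (1 <= i)%N -> (i < k)%N -> tgrid Delta i < tgrid Delta k.
  by move=> i1 ik; rewrite /tgrid ltr_pM2r // ltr_nat; clear -i1 ik; lia.
have tge0 k : 0 <= tgrid Delta k by rewrite /tgrid mulr_ge0 ?ler0n ?ltW.
set K1 := expR (L1 * Delta).
set K2 := expR (L2 * Delta).
have lP1 := @flow_lip _ _ f1 L1 Delta Phi1 L10 (ltW D0) lf1 fl1.
have lP2 := @flow_lip _ _ f2 L2 Delta Phi2 L20 (ltW D0) lf2 fl2.
pose pp s := Num.max 0 (s - T1).
pose P k := mu / L1 * (expR (L1 * pp (tgrid Delta k)) - 1)
   + (1 - expR (L1 * tgrid Delta k)) / (1 - K1) * eps.
pose e k := enorm (yhat k - x (tgrid Delta k)).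
have claim1 : forall k, (1 <= k <= m)%N -> e k <= P k.
  elim=> [//|k IH] /andP[k1 km].
  case: (eqVneq k 0) => [->|kn0].
    rewrite /e /P /pp t1 y1 xx0 subrr enorm0 sub0r.
    have -> : Num.max 0 (- T1) = 0 by apply/max_idPl; lra.
    by rewrite !mulr0 expR0 subrr mulr0 mul0r mul0r addr0.
  have k1' : (1 <= k)%N by clear -kn0; lia.
  have IHk := IH (ltac:(apply/andP; split; clear -k1' km; lia)).
  have hk2 : (2 <= k.+1 <= J)%N by apply/andP; split; clear -k1' km mJ; lia.
  have tk1 := tS k k1'.
  have le_tb : tgrid Delta k.+1 <= tb := tmono _ _ km.
  have Nk := Nacc _ hk2; rewrite le_tb in Nk.
  have Yk := yrec _ hk2; rewrite /= in Yk.
  have st := @step_bound _ _ Phi1 K1 (yhat k) (N k.+1 (yhat k)) (x (tgrid Delta k))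
    (x (tgrid Delta k.+1)) eps lP1 Nk.
  have aT2 : tgrid Delta k + Delta <= T2 by rewrite -tk1; apply: (le_trans le_tb); exact: ltW.
  have Dk := @D1bound _ _ f1 f2 L1 mu T1 T2 Delta Phi1 x (tgrid Delta k) L10 D0 (ltW mu0)
    lf1 fmu s1 s2 fl1 (tge0 k) aT2.
  rewrite /e Yk; apply: (le_trans st); rewrite tk1 /P tk1.
  set a := tgrid Delta k in Dk IHk aT2 *.
  have H1 : K1 * e k <= K1 * P k by rewrite ler_pM2l // expR_gt0.
  have Hs := @S_step _ L1 Delta a eps L10 D0.
  have Hm : K1 * (expR (L1 * pp a) - 1) + (expR (L1 * (pp (a + Delta) - pp a)) - 1)
      = expR (L1 * pp (a + Delta)) - 1.
    apply: mu_alg; rewrite /pp; case: (leP a T1) => ha; [left; apply/max_idPl; lra|right].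
    rewrite (_ : Num.max 0 (a - T1) = a - T1); last by apply/max_idPr; lra.
    rewrite (_ : Num.max 0 (a + Delta - T1) = a + Delta - T1); last by apply/max_idPr; lra.
    ring.
  have Hm' := congr1 (fun z => mu / L1 * z) Hm.
  rewrite /= in Hm'.
  rewrite /P /e -/a in IHk H1.
  rewrite /pp in Hm' IHk H1 Dk *.
  move: Hs Hm' IHk H1 Dk; rewrite -/K1 /e.
  set E1 := enorm _; set E2 := enorm _.
  move=> Hs Hm' _ H1 Dk; lra.
have claim2 : forall k, (m <= k <= J)%N ->
    e k <= expR (L2 * (tgrid Delta k - tb)) * e m
           + (1 - expR (L2 * (tgrid Delta k - tb))) / (1 - K2) * eps.
  elim=> [|k IH] /andP[mk kJ].
    by clear -mJ mk; lia.
  case: (eqVneq k.+1 m) => [km|km].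
    by rewrite -km /tb km subrr mulr0 expR0 subrr mul1r !mul0r addr0.
  have mk' : (m <= k)%N by clear -mk km; lia.
  have m1 : (1 <= m)%N by clear -mJ; lia.
  have k1' : (1 <= k)%N by clear -mk' m1; lia.
  have IHk := IH (ltac:(apply/andP; split; clear -mk' kJ; lia)).
  have hk2 : (2 <= k.+1 <= J)%N by apply/andP; split; clear -k1' kJ; lia.
  have tk1 := tS k k1'.
  have gt_tb : tb < tgrid Delta k.+1 := tstrict m k.+1 m1 (ltac:(clear -mk' ; lia)).
  have Nk := Nacc _ hk2; rewrite (leNgt (tgrid Delta k.+1) tb) gt_tb in Nk.
  have Yk := yrec _ hk2; rewrite /= in Yk.
  have st := @step_bound _ _ Phi2 K2 (yhat k) (N k.+1 (yhat k)) (x (tgrid Delta k))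
    (x (tgrid Delta k.+1)) eps lP2 Nk.
  have aT2 : tgrid Delta k + Delta <= T2.
    by rewrite -tk1 -tJ; apply: tmono.
  have T1a : T1 <= tgrid Delta k by apply: (le_trans T1tb); apply: tmono.
  have Dk := @D2bound _ _ f2 L2 T1 T2 Delta Phi2 x (tgrid Delta k) L20 D0 lf2 s2 fl2 T1a aT2.
  rewrite /e Yk; apply: (le_trans st); rewrite tk1.
  set a := tgrid Delta k in Dk IHk aT2 T1a *.
  have Hs := @S_step _ L2 Delta (a - tb) eps L20 D0.
  rewrite (_ : a - tb + Delta = a + Delta - tb) in Hs; last by ring.
  have HE : K2 * expR (L2 * (a - tb)) = expR (L2 * (a + Delta - tb)).
    by rewrite /K2 -expRD; congr expR; ring.
  have H1 : K2 * e k <= K2 * (expR (L2 * (a - tb)) * e m + (1 - expR (L2 * (a - tb))) / (1 - K2) * eps).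
    by rewrite ler_pM2l // expR_gt0.
  move: Hs HE H1 Dk; rewrite -/K2 /e -/a.
  set E1 := enorm (yhat k - _); set E2 := enorm _; set Em := enorm _.
  move=> Hs HE H1 Dk.
  have HE' : K2 * expR (L2 * (a - tb)) * E2 = expR (L2 * (a + Delta - tb)) * E2 by rewrite HE.
  lra.
have m1 : (1 <= m)%N by clear -mJ; lia.
have mub s : 0 <= s -> mu / L1 * (expR (L1 * s) - 1) <= mu * s * expR (Num.max L1 L2 * s).
  move=> s0.
  have h := @expm1_le _ L1 s L10 s0.
  have h2 : expR (L1 * s) <= expR (Num.max L1 L2 * s).
    by rewrite ler_expR; apply: ler_wpM2r => //; rewrite le_max lexx.
  rewrite (_ : mu / L1 * (expR (L1 * s) - 1) = mu * ((expR (L1 * s) - 1) / L1)); last by ring.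
  rewrite -mulrA ler_pM2l //; apply: (le_trans h); apply: ler_wpM2l => //.
have ej : err = e j by [].
have jm_of : tj <= tb -> (j <= m)%N.
  move=> h; rewrite leqNgt; apply/negP => mj.
  have := tstrict m j m1 mj; rewrite -/tb -/tj; lra.
have jJ' : (1 <= j <= J)%N by case/andP: jJ => a b; apply/andP; split => //; clear -a; lia.
split; [|split].
- move=> /andP[tj0 tjT1].
  have jm := jm_of (le_trans tjT1 T1tb).
  have := claim1 j (ltac:(apply/andP; split => //; clear -jJ; case/andP: jJ => a _; lia)).
  rewrite /P /pp -/tj (_ : Num.max 0 (tj - T1) = 0); last by apply/max_idPl; lra.
  by rewrite mulr0 expR0 subrr mulr0 add0r.
- move=> /andP[T1tj tjtb].
  have jm := jm_of tjtb.
  have := claim1 j (ltac:(apply/andP; split => //; clear -jJ; case/andP: jJ => a _; lia)).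
  rewrite /P /pp -/tj (_ : Num.max 0 (tj - T1) = tj - T1); last by apply/max_idPr; lra.
  have := mub (tj - T1) (ltac:(lra)).
  rewrite ej; lra.
- move=> /andP[tbtj tjT2].
  have mj : (m <= j)%N.
    rewrite leqNgt; apply/negP => jm.
    have := tstrict j m (ltac:(case/andP: jJ => a _; clear -a; lia)) jm; rewrite -/tb -/tj; lra.
  have c2 := claim2 j (ltac:(apply/andP; split => //; by case/andP: jJ)).
  have c1 := claim1 m (ltac:(apply/andP; split => //)).
  move: c1; rewrite /P /pp -/tb (_ : Num.max 0 (tb - T1) = tb - T1); last by apply/max_idPr; lra.
  have r_eta : tb - T1 <= eta by move: etab; rewrite ger0_norm // subr_ge0.
  have mb := mub (tb - T1) (ltac:(lra)).
  have mb2 : mu * (tb - T1) * expR (Num.max L1 L2 * (tb - T1)) <= mu * eta * expR (Num.max L1 L2 * eta).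
    rewrite -!mulrA ler_pM2l //; apply: ler_pM; [lra | exact/ltW/expR_gt0 | lra | ].
    rewrite ler_expR; apply: ler_wpM2l => //.
    by rewrite le_max (ltW L10).
  move=> c1.
  set Z := expR (L2 * (tj - tb)).
  have Z0 : 0 < Z := expR_gt0 _.
  set Em := e m in c1 c2.
  have h3 : Z * Em <= Z * (mu * eta * expR (Num.max L1 L2 * eta) + (1 - expR (L1 * tb)) / (1 - K1) * eps).
    by rewrite ler_pM2l //; lra.
  rewrite expRD -/Z ej; move: c2; rewrite -/tj -/Z => c2.
  lra.
Qed.
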